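(* Let $\mathcal{X}$ be a finite set, $\pi$ a probability mass function on $\mathcal{X}$ with full support, $P$ a $\pi$-stationary transition matrix, and let a group $\mathcal{G}$ act on $\mathcal{X}$ with orbits $(\mathcal{O}_i)_{i=1}^k$ and Gibbs orbit kernel $G$. Then $D^\pi_{KL}(GPG\|\Pi)=D^{\overline{\pi}}_{KL}(\overline{P}\|\overline{\Pi})$.
   Context: $G(x,y)=\pi(y)/\pi(\mathcal{O}(x))$ for $y$ in the orbit $\mathcal{O}(x)$ of $x$, else $0$, with $\pi(A)=\sum_{z\in A}\pi(z)$. $\Pi$ is the matrix with every row equal to $\pi$. $\overline{\pi}=(\pi(\mathcal{O}_1),\dots,\pi(\mathcal{O}_k))$, $\overline{\Pi}$ is the $k\times k$ matrix with every row $\overline{\pi}$, and $\overline{P}(i,j)=\frac{1}{\pi(\mathcal{O}_i)}\sum_{x\in\mathcal{O}_i,y\in\mathcal{O}_j}\pi(x)P(x,y)$. For a distribution $\mu$ and transition matrices $K,L$ on the same finite set, $D^\mu_{KL}(K\|L)=\sum_{x,y}\mu(x)K(x,y)\log\frac{K(x,y)}{L(x,y)}$ with $0\log(0/a)=0$. *)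

(* Defs.v *)
From HB Require Import structures.
From mathcomp Require Import all_boot all_order all_algebra all_fingroup.
From mathcomp Require Import reals exp.
Set Implicit Arguments. Unset Strict Implicit. Unset Printing Implicit Defensive.
Import Order.TTheory GRing.Theory Num.Theory.
Local Open Scope ring_scope.

Section Defs.
Variable R : realType.

Section Generic.
Variable T : finType.

Definition mulK (K L : T -> T -> R) : T -> T -> R :=
  fun x y => \sum_(z : T) K x z * L z y.

Definition DKL (mu : T -> R) (K L : T -> T -> R) : R :=
  \sum_(x : T) \sum_(y : T)
     (if K x y == 0 then 0 else mu x * K x y * ln (K x y / L x y)).

Definition full_support_pmf (pi : T -> R) : Prop :=
  (forall x, 0 < pi x) /\ \sum_(x : T) pi x = 1.

Definition stochastic (P : T -> T -> R) : Prop :=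
  (forall x y, 0 <= P x y) /\ (forall x, \sum_(y : T) P x y = 1).

Definition stationary (pi : T -> R) (P : T -> T -> R) : Prop :=
  forall y, \sum_(x : T) pi x * P x y = pi y.

Definition massR (pi : T -> R) (A : {set T}) : R := \sum_(z in A) pi z.

Definition PiK (pi : T -> R) : T -> T -> R := fun _ y => pi y.

End Generic.

Section Orbits.
Variables (gT : finGroupType) (X : finType) (H : {group gT})
          (to : {action gT &-> X}).

Definition orbits : {set {set X}} := [set orbit to H x | x in [set: X]].

Definition orbT := {O : {set X} | O \in orbits}.

Definition gibbs (pi : X -> R) : X -> X -> R :=
  fun x y => if y \in orbit to H x then pi y / massR pi (orbit to H x) else 0.

End Orbits.
End Defs.

Section Bar.
Variables (R : realType) (gT : finGroupType) (X : finType) (H : {group gT})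
          (to : {action gT &-> X}).

Definition pibar (pi : X -> R) : {O : {set X} | O \in orbits H to} -> R :=
  fun O => massR pi (val O).

Definition Pbar (pi : X -> R) (P : X -> X -> R) :
  {O : {set X} | O \in orbits H to} -> {O : {set X} | O \in orbits H to} -> R :=
  fun Oi Oj => (massR pi (val Oi))^-1 *
     \sum_(x in val Oi) \sum_(y in val Oj) pi x * P x y.

Definition Pibar (pi : X -> R) :
  {O : {set X} | O \in orbits H to} -> {O : {set X} | O \in orbits H to} -> R :=
  PiK (pibar pi).
End Bar.
Arguments pibar {R gT X} H to pi _.
Arguments Pbar {R gT X} H to pi P _ _.
Arguments Pibar {R gT X} H to pi _ _.

(* Main.v *)
Require Import Defs.
From HB Require Import structures.
From mathcomp Require Import all_boot all_order all_algebra all_fingroup.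
From mathcomp Require Import reals exp.
From mathcomp Require Import ring.
Import Order.TTheory GRing.Theory Num.Theory.
Local Open Scope ring_scope.

Section Aux.
Variables (R : realType) (gT : finGroupType) (X : finType)
    (H : {group gT}) (to : {action gT &-> X}) (pi : X -> R).
Hypothesis pipos : forall x, 0 < pi x.

Local Notation orbT := {O : {set X} | O \in orbits H to}.

Lemma orb_in x : orbit to H x \in orbits H to.
Proof. by apply/imsetP; exists x; rewrite ?inE. Qed.

Definition oo x : orbT := exist _ (orbit to H x) (orb_in x).

Lemma oo_eq x (i : orbT) : (oo x == i) = (x \in val i).
Proof.
case: i => O /= HO; rewrite -val_eqE /=.
case/imsetP: HO => z _ ->; exact: orbit_eq_mem.
Qed.

Lemma mass_pos (O : {set X}) z : z \in O -> 0 < massR pi O.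
Proof.
move=> zO; rewrite /massR (bigD1 z) //=; apply: ltr_wpDr => //.
by apply: sumr_ge0 => i _; apply: ltW.
Qed.

Lemma massO_pos x : 0 < massR pi (orbit to H x).
Proof. apply: (@mass_pos _ x); exact: orbit_refl. Qed.

Lemma pibar_pos (i : orbT) : 0 < pibar H to pi i.
Proof.
case: i => O HO; rewrite /pibar /=.
case/imsetP: HO => z _ ->; exact: massO_pos.
Qed.

Lemma sum_orb (F : orbT -> R) :
  \sum_x pi x * F (oo x) = \sum_i pibar H to pi i * F i.
Proof.
rewrite (partition_big oo xpredT) //=; apply: eq_bigr => i _.
rewrite (eq_bigr (fun x => pi x * F i)); last by move=> x /=; rewrite ?andTb => /eqP ->.
rewrite -mulr_suml /pibar /massR; congr (_ * _).
by apply: eq_bigl => x; rewrite oo_eq.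
Qed.

Lemma M_eq (P : X -> X -> R) x y :
  mulK (mulK (gibbs H to pi) P) (gibbs H to pi) x y
  = pi y / massR pi (orbit to H y) * Pbar H to pi P (oo x) (oo y).
Proof.
rewrite /mulK /gibbs /Pbar /=.
set c := pi y / massR pi (orbit to H y) * (massR pi (orbit to H x))^-1.
rewrite mulrA -/c big_distrr /=.
rewrite big_mkcond /=.
under [RHS]eq_bigr => z _ do rewrite big_distrr /= big_mkcond /=.
rewrite [RHS]exchange_big /=.
apply: eq_bigr => w _; rewrite big_distrl /=.
rewrite [RHS]big_mkcond /=; apply: eq_bigr => z _.
case: ifP => zx; last by rewrite !mul0r.
rewrite [y \in _]orbit_sym.
case: ifP => wy; last by rewrite !mulr0.
have Ow : orbit to H w = orbit to H y.
  by apply/eqP; rewrite orbit_eq_mem.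
rewrite Ow /c; ring.
Qed.

End Aux.
Arguments oo {gT X} H to x.
Arguments sum_orb {R gT X H to pi} F.
Arguments pibar_pos {R gT X H to pi} pipos i.
Arguments M_eq {R gT X H to pi} P x y.
Arguments massO_pos {R gT X H to pi} pipos x.

Theorem proposition6p3 (R : realType) (gT : finGroupType) (X : finType)
    (H : {group gT}) (to : {action gT &-> X})
    (pi : X -> R) (P : X -> X -> R) :
  full_support_pmf pi -> stochastic P -> stationary pi P ->
  DKL pi (mulK (mulK (gibbs H to pi) P) (gibbs H to pi)) (PiK pi)
  = DKL (pibar H to pi) (Pbar H to pi P) (Pibar H to pi).
Proof.
move=> [pipos _] _ _.
set Tf := fun i j => if Pbar H to pi P i j == 0 then 0
   else Pbar H to pi P i j * ln (Pbar H to pi P i j / pibar H to pi j).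
set g := fun i => \sum_y pi y * (Tf i (oo H to y) / pibar H to pi (oo H to y)).
rewrite /DKL.
transitivity (\sum_x pi x * g (oo H to x)).
  apply: eq_bigr => x _; rewrite /g big_distrr /=; apply: eq_bigr => y _.
  rewrite M_eq /PiK /Tf.
  have my : 0 < massR pi (orbit to H y) by exact: massO_pos pipos y.
  have pbe : pibar H to pi (oo H to y) = massR pi (orbit to H y) by [].
  rewrite pbe.
  have nz : pi y / massR pi (orbit to H y) != 0.
    by rewrite mulf_neq0 // ?invr_eq0 gt_eqF.
  rewrite mulf_eq0 (negbTE nz) /=.
  case: ifP => _; first by rewrite !mul0r !mulr0.
  have -> : pi y / massR pi (orbit to H y) * Pbar H to pi P (oo H to x) (oo H to y) / pi y
    = Pbar H to pi P (oo H to x) (oo H to y) / massR pi (orbit to H y).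
    by field; rewrite ?gt_eqF.
  by field; rewrite gt_eqF.
rewrite sum_orb; apply: eq_bigr => i _.
rewrite /g (sum_orb (fun j => Tf i j / pibar H to pi j)) big_distrr /=.
apply: eq_bigr => j _.
have pj := pibar_pos pipos j.
rewrite /Tf /Pibar /PiK /=; case: (Pbar H to pi P i j == 0); first by rewrite !mul0r !mulr0.
by field; rewrite gt_eqF.
Qed.
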